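(* Let $V \ge 2$ be an integer, let $z \in \mathbb{R}^V$ be a logit vector and let $p = \mathrm{softmax}(z) \in \Delta^{V-1}$, i.e. $p_j = e^{z_j}/\sum_{k=1}^V e^{z_k}$. Define the token-wise self-certainty \[ \mathrm{SC}(p) = \mathrm{KL}(U \,\|\, p) = -\frac{1}{V}\sum_{j=1}^V \log\big(V\,p_j\big), \] where $U$ is the uniform distribution on $\{1,\dots,V\}$. Fix a target index $y^* \in \{1,\dots,V\}$ and consider the gradient-ascent direction on $\log p_{y^*}$ with respect to the logits, $\Delta z_k = \frac{\partial \log p_{y^*}}{\partial z_k} = \delta_{k,y^*} - p_k$ for $k=1,\dots,V$. For $\eta \ge 0$ set $z(\eta) = z + \eta\,\Delta z$ and $p(\eta) = \mathrm{softmax}(z(\eta))$. Then \[ \left.\frac{d}{d\eta}\mathrm{SC}\big(p(\eta)\big)\right|_{\eta=0} > 0 \quad\Longleftrightarrow\quad p_{y^*} > \|p\|_2^2 = \sum_{k=1}^V p_k^2 . \] That is, a gradient-ascent step on $\log p_{y^*}$ increases the self-certainty to first order in the step size if and only if $p_{y^*} > \|p\|_2^2$.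
   Context: $\delta_{k,y^*}$ is the Kronecker delta. $\Delta^{V-1}$ denotes the probability simplex in $\mathbb{R}^V$. *)

(* Defs.v *)
From HB Require Import structures.
From mathcomp Require Import all_boot all_order all_algebra.
From mathcomp Require Import all_classical all_reals all_analysis.
Set Implicit Arguments. Unset Strict Implicit. Unset Printing Implicit Defensive.
Import Order.TTheory GRing.Theory Num.Theory.
Local Open Scope ring_scope.

Definition softmax (R : realType) (V : nat) (z : 'I_V -> R) : 'I_V -> R :=
  fun j => expR (z j) / \sum_(k < V) expR (z k).

Definition SC (R : realType) (V : nat) (p : 'I_V -> R) : R :=
  - (V%:R)^-1 * \sum_(j < V) ln (V%:R * p j).

Definition grad_logp (R : realType) (V : nat) (p : 'I_V -> R) (y : 'I_V) : 'I_V -> R :=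
  fun k => (k == y)%:R - p k.

(* Main.v *)
Require Import Defs.
From HB Require Import structures.
From mathcomp Require Import all_boot all_order all_algebra.
From mathcomp Require Import all_classical all_reals all_analysis.
From mathcomp Require Import ring lra.
Import Order.TTheory GRing.Theory Num.Theory.
Local Open Scope ring_scope.

Theorem theorem1 (R : realType) (V : nat) (hV : (2 <= V)%N)
    (z : 'I_V -> R) (ystar : 'I_V) :
  let p := softmax z in
  let dz := grad_logp p ystar in
  (0 < derive1 (fun eta : R => SC (softmax (fun k => z k + eta * dz k))) 0)
  <-> (\sum_(k < V) p k ^+ 2 < p ystar).
Proof.
move=> p dz.
set S := fun eta : R => \sum_(k < V) expR (z k + eta * dz k).
have Spos : forall w : 'I_V -> R, 0 < \sum_(k < V) expR (w k).
  move=> w; rewrite (bigD1 ystar) //=.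
  apply: (lt_le_trans (expR_gt0 (w ystar))); rewrite lerDl.
  by apply: sumr_ge0 => *; exact: expR_ge0.
have S0 : S 0 = \sum_(k < V) expR (z k).
  by apply: eq_bigr => k _; rewrite mul0r addr0.
have psum : \sum_(k < V) p k = 1.
  rewrite /p /softmax -mulr_suml mulfV //; exact/lt0r_neq0/Spos.
have dzsum : \sum_(k < V) dz k = 0.
  rewrite /dz /grad_logp sumrB psum.
  by rewrite (bigD1 ystar) //= eqxx big1 ?addr0 ?subrr // => k /negbTE ->.
have V0 : (V%:R : R) != 0 by rewrite pnatr_eq0 -lt0n; apply: leq_trans hV.
set C := - (V%:R)^-1 * \sum_(j < V) (ln (V%:R : R) + z j).
have HF : (fun eta : R => SC (softmax (fun k => z k + eta * dz k)))
          = fun eta => C + ln (S eta).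
  apply/funext => eta; rewrite /SC /softmax /C -/(S eta).
  have Sp := Spos (fun k => z k + eta * dz k).
  have -> : \sum_(j < V) ln (V%:R * (expR (z j + eta * dz j) / S eta))
      = \sum_(j < V) (ln (V%:R : R) + z j) + eta * \sum_(j < V) dz j
        - V%:R * ln (S eta).
    rewrite mulr_sumr -big_split /= mulr_natl.
    have -> : ln (S eta) *+ V = \sum_(j < V) ln (S eta) by rewrite sumr_const card_ord.
    rewrite -sumrB.
    apply: eq_bigr => j _.
    rewrite lnM ?posrE ?ltr0n ?(leq_trans _ hV) ?divr_gt0 ?expR_gt0 //.
    rewrite ln_div ?posrE ?expR_gt0 // expRK; lra.
  rewrite dzsum mulr0 addr0 mulrDr mulrN mulNr.
  by rewrite mulNr opprK mulrA mulVf // mul1r.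
rewrite HF.
have Dk : forall k, is_derive (0:R) 1 (fun eta : R => expR (z k + eta * dz k))
    (expR (z k) * dz k).
  move=> k.
  have Di : is_derive (0:R) 1 (fun eta : R => z k + eta * dz k) (dz k).
    have Hm : is_derive (0:R) 1 (@id R * cst (dz k)) ((0:R) *: (0:R) + dz k *: (1:R)).
      apply: is_deriveM.
    have Ha := is_deriveD (is_derive_cst (z k) (0:R) 1) Hm.
    have -> : (fun eta : R => z k + eta * dz k) = cst (z k) + id * cst (dz k) by apply/funext.
    rewrite scale0r !add0r in Ha; move: Ha; by rewrite /GRing.scale /= mulr1.
  have := is_derive1_comp (is_derive_expR _) Di.
  by rewrite /= mul0r addr0.
have DS : is_derive (0:R) 1 S (\sum_(k < V) (expR (z k) * dz k)).
  have := is_derive_sum Dk.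
  by rewrite fct_sumE.
have S0pos : 0 < S 0 by rewrite S0; exact: Spos.
have DL := is_derive1_comp (is_derive1_ln S0pos) DS.
have DF := is_deriveD (is_derive_cst C (0:R) 1) DL.
have -> : (fun eta : R => C + ln (S eta)) = cst C + (@ln R \o S) by apply/funext.
rewrite derive1E derive_val add0r.
have -> : (S 0)^-1 * \sum_(k < V) expR (z k) * dz k = p ystar - \sum_(k < V) p k ^+ 2.
  rewrite mulr_sumr.
  have -> : \sum_(k < V) (S 0)^-1 * (expR (z k) * dz k) = \sum_(k < V) p k * dz k.
    apply: eq_bigr => k _; rewrite /p /softmax -S0; field; exact: lt0r_neq0.
  rewrite /dz /grad_logp.
  under eq_bigr do rewrite mulrBr.
  rewrite sumrB (bigD1 ystar) //= eqxx mulr1 big1 ?addr0.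
    by congr (_ - _); apply: eq_bigr => k _; rewrite expr2.
  by move=> k /negbTE ->; rewrite mulr0.
by rewrite subr_gt0.
Qed.
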